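(* Let $R$ be a ring and $\mathcal{X}$ a class of left $R$-modules. Suppose every left $R$-module $M$ has an injective (monic) $\mathcal{X}$-injective preenvelope $\phi: M \to E$ (i.e. $E$ is an $\mathcal{X}$-injective module and $\phi$ is a preenvelope with respect to the class of $\mathcal{X}$-injective modules) with $\mathrm{coker}\,\phi \in \mathcal{X}$. Then every bounded complex of left $R$-modules has a $C(\mathcal{X}\text{-injective})$-preenvelope.
   Context: A left $R$-module $E$ is $\mathcal{X}$-injective if $\mathrm{Ext}^1_R(N, E) = 0$ for all $N \in \mathcal{X}$. $C(\mathcal{X}\text{-injective})$ denotes the class of complexes all of whose terms are $\mathcal{X}$-injective modules. For a class $\mathcal{F}$ of objects in an abelian category, a morphism $\phi: M \to F$ with $F \in \mathcal{F}$ is an $\mathcal{F}$-preenvelope of $M$ if every morphism $f: M \to F'$ with $F' \in \mathcal{F}$ factors as $f = g\phi$ for some $g: F \to F'$. A complex is bounded if only finitely many of its terms are nonzero. *)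

(* Defs.v *)
From HB Require Import structures.
From mathcomp Require Import all_boot all_order all_algebra.
Set Implicit Arguments. Unset Strict Implicit. Unset Printing Implicit Defensive.
Import Order.TTheory GRing.Theory Num.Theory.
Local Open Scope ring_scope.

Section Defs.
Variable R : pzRingType.

(* Yoneda description of Ext^1_R(N, E) = 0: every extension
   0 -> E -i-> Y -p-> N -> 0 of left R-modules splits. *)
Definition Ext1_zero (N E : lmodType R) : Prop :=
  forall (Y : lmodType R) (i : {linear E -> Y}) (p : {linear Y -> N}),
    injective i -> (forall n : N, exists y, p y = n) ->
    (forall y, p y = 0 <-> exists e, y = i e) ->
    exists r : {linear Y -> E}, forall e, r (i e) = e.

Definition Xinjective (X : lmodType R -> Prop) (E : lmodType R) : Prop :=
  forall N : lmodType R, X N -> Ext1_zero N E.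

Definition mod_preenvelope (F : lmodType R -> Prop) (M E : lmodType R)
    (phi : {linear M -> E}) : Prop :=
  F E /\ forall (E' : lmodType R) (f : {linear M -> E'}), F E' ->
    exists g : {linear E -> E'}, forall m, g (phi m) = f m.

Definition is_coker (M E Q : lmodType R) (phi : {linear M -> E})
    (pi : {linear E -> Q}) : Prop :=
  (forall q : Q, exists e, pi e = q) /\ forall e, pi e = 0 <-> exists m, e = phi m.

Record complex := Complex {
  cobj : int -> lmodType R;
  cdif : forall n : int, {linear cobj n -> cobj (n + 1)};
  cdd : forall (n : int) (x : cobj n), cdif (n + 1) (cdif n x) = 0 }.

Definition chain_map (C D : complex)
    (f : forall n : int, {linear cobj C n -> cobj D n}) : Prop :=
  forall (n : int) (x : cobj C n), f (n + 1) (cdif C n x) = cdif D n (f n x).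

Definition bounded_complex (C : complex) : Prop :=
  exists a b : int, forall n : int, (n < a \/ b < n) -> forall x : cobj C n, x = 0.

Definition C_Xinjective (X : lmodType R -> Prop) (E : complex) : Prop :=
  forall n : int, Xinjective X (cobj E n).

Definition complex_preenvelope (G : complex -> Prop) (C E : complex)
    (phi : forall n : int, {linear cobj C n -> cobj E n}) : Prop :=
  chain_map phi /\ G E /\
  forall (E' : complex) (f : forall n : int, {linear cobj C n -> cobj E' n}),
    chain_map f -> G E' ->
    exists g : forall n : int, {linear cobj E n -> cobj E' n},
      chain_map g /\ forall (n : int) (x : cobj C n), g n (phi n x) = f n x.

Definition has_complex_preenvelope (G : complex -> Prop) (C : complex) : Prop :=
  exists (E : complex) (phi : forall n : int, {linear cobj C n -> cobj E n}),
    complex_preenvelope G phi.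

End Defs.

(* Main.v *)
Require Import Defs.
From HB Require Import structures.
From mathcomp Require Import all_boot all_order all_algebra.
From mathcomp Require Import zify.
From Stdlib Require Import ClassicalEpsilon FunctionalExtensionality PropExtensionality ProofIrrelevance.
Set Implicit Arguments. Unset Strict Implicit. Unset Printing Implicit Defensive.
Import Order.TTheory GRing.Theory Num.Theory.
Local Open Scope ring_scope.

Section Quot.
Variables (R : pzRingType) (V : lmodType R).
Record subm := Subm { smem : V -> Prop; smem0 : smem 0;
  smemB : forall x y, smem x -> smem y -> smem (x - y);
  smemZ : forall a x, smem x -> smem (a *: x) }.
Variable S : subm.
Let W := smem S.
Let W0 : W 0 := smem0 S.
Let WB : forall x y, W x -> W y -> W (x - y) := @smemB S.
Let WZ : forall a x, W x -> W (a *: x) := @smemZ S.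

Lemma WN x : W x -> W (- x).
Proof. by move=> h; rewrite -sub0r; apply: WB. Qed.
Lemma WD x y : W x -> W y -> W (x + y).
Proof. by move=> hx hy; rewrite -[y]opprK; apply: WB => //; apply: WN. Qed.

Definition rep (x : V) : V := epsilon (inhabits (0 : V)) (fun y => W (y - x)).

Lemma repW x : W (rep x - x).
Proof. apply: (epsilon_spec (inhabits (0:V)) (fun y => W (y - x))). exists x. by rewrite subrr. Qed.

Lemma rep_eq x y : W (x - y) -> rep x = rep y.
Proof.
move=> h; rewrite /rep; congr epsilon; apply: functional_extensionality => z.
apply: propositional_extensionality; split => hz.
- have -> : z - y = (z - x) + (x - y) by rewrite addrA subrK.
  exact: WD.
- have -> : z - x = (z - y) - (x - y) by rewrite opprB addrA subrK.
  exact: WB.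
Qed.

Lemma rep_idem x : rep (rep x) = rep x.
Proof. exact/rep_eq/repW. Qed.

Definition Q := {x : V | rep x == x}.
HB.instance Definition _ := [Choice of Q by <:].

Definition qpi (x : V) : Q := exist _ (rep x) (introT eqP (rep_idem x)).

Lemma piK (p : Q) : qpi (val p) = p.
Proof. case: p => x hx; apply: val_inj => /=; exact/eqP. Qed.

Lemma pi_eq x y : W (x - y) -> qpi x = qpi y.
Proof. by move=> h; apply: val_inj => /=; apply: rep_eq. Qed.

Lemma pi_eqW x y : qpi x = qpi y -> W (x - y).
Proof.
move=> /(congr1 val) /= e.
have -> : x - y = (rep y - y) - (rep x - x) by rewrite e opprB [in RHS]addrC addrA subrK.
apply: WB; exact: repW.
Qed.

Lemma valW x : W (val (qpi x) - x).
Proof. exact: repW. Qed.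

Definition qadd (p q : Q) := qpi (val p + val q).
Definition qopp (p : Q) := qpi (- val p).
Definition qzero := qpi 0.
Definition qscale (a : R) (p : Q) := qpi (a *: val p).

Lemma qaddE x y : qadd (qpi x) (qpi y) = qpi (x + y).
Proof.
apply: pi_eq; have -> : val (qpi x) + val (qpi y) - (x + y) = (val (qpi x) - x) + (val (qpi y) - y).
  by rewrite opprD addrACA.
by apply: WD; apply: valW.
Qed.
Lemma qoppE x : qopp (qpi x) = qpi (- x).
Proof. apply: pi_eq; rewrite -opprD; apply: WN; exact: valW. Qed.
Lemma qscaleE a x : qscale a (qpi x) = qpi (a *: x).
Proof. apply: pi_eq; rewrite -scalerBr; apply: WZ; exact: valW. Qed.

Lemma Qind (P : Q -> Prop) : (forall x, P (qpi x)) -> forall p, P p.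
Proof. by move=> h p; rewrite -(piK p). Qed.

Lemma qaddA : associative qadd.
Proof. by elim/Qind=> x; elim/Qind=> y; elim/Qind=> z; rewrite !qaddE addrA. Qed.
Lemma qaddC : commutative qadd.
Proof. by elim/Qind=> x; elim/Qind=> y; rewrite !qaddE addrC. Qed.
Lemma qadd0 : left_id qzero qadd.
Proof. by elim/Qind=> x; rewrite /qzero qaddE add0r. Qed.
Lemma qaddN : left_inverse qzero qopp qadd.
Proof. by elim/Qind=> x; rewrite qoppE qaddE addNr. Qed.

HB.instance Definition _ := GRing.isZmodule.Build Q qaddA qaddC qadd0 qaddN.
Lemma piD x y : qpi x + qpi y = qpi (x + y). Proof. exact: qaddE. Qed.

Lemma qscaleA a b v : qscale a (qscale b v) = qscale (a * b) v.
Proof. by elim/Qind: v => x; rewrite !qscaleE scalerA. Qed.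
Lemma qscale1 : left_id 1 qscale.
Proof. by elim/Qind=> x; rewrite qscaleE scale1r. Qed.
Lemma qscaleDr : right_distributive qscale +%R.
Proof. move=> a; elim/Qind=> x; elim/Qind=> y.
by rewrite piD !qscaleE piD scalerDr. Qed.
Lemma qscaleDl v : {morph qscale^~ v: a b / a + b}.
Proof. elim/Qind: v => x a b.
by rewrite !qscaleE piD scalerDl. Qed.

HB.instance Definition _ := GRing.Zmodule_isLmodule.Build R Q qscaleA qscale1 qscaleDr qscaleDl.

Lemma piZ a x : a *: qpi x = qpi (a *: x). Proof. exact: qscaleE. Qed.
Lemma pi_is_linear : linear qpi.
Proof. by move=> a x y; rewrite piZ piD. Qed.

HB.instance Definition _ := GRing.isLinear.Build R V Q _ qpi pi_is_linear.

Lemma pi0 x : W x -> qpi x = 0.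
Proof. move=> h; apply: pi_eq; by rewrite subr0. Qed.

Section Lift.
Variables (M : lmodType R) (h : {linear V -> M}).
Definition qlift (hW : forall x, W x -> h x = 0) (p : Q) : M := h (val p).
Variable hW : forall x, W x -> h x = 0.
Lemma qliftE x : qlift hW (qpi x) = h x.
Proof. apply/eqP; rewrite -subr_eq0 /qlift -linearB; apply/eqP/hW; exact: valW. Qed.
Lemma qlift_is_linear : linear (qlift hW).
Proof. move=> a; elim/Qind=> x; elim/Qind=> y.
by rewrite -linearP !qliftE linearP. Qed.
HB.instance Definition _ := GRing.isLinear.Build R Q M _ (qlift hW) qlift_is_linear.
End Lift.
End Quot.

Section Lin.
Variables (R : pzRingType) (U V : lmodType R).
Definition lzero (x : U) : V := 0.
Lemma lzero_lin : linear lzero. Proof. by move=> a x y; rewrite /lzero scaler0 addr0. Qed.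
HB.instance Definition _ := GRing.isLinear.Build R U V _ lzero lzero_lin.
End Lin.
Arguments lzero {R U V}.

Section Main.
Variables (R : pzRingType) (X : lmodType R -> Prop).
Variable env : lmodType R -> lmodType R.
Variable envm : forall M : lmodType R, {linear M -> env M}.
Hypothesis envP : forall M, mod_preenvelope (Xinjective X) (envm M).
Variable C : complex R.
Variable a : int.
Hypothesis Cbot : forall n, n < a -> forall x : cobj C n, x = 0.

Record Stage (n : int) := mkStage {
  Dm : lmodType R; ph : {linear cobj C n -> Dm};
  prevM : lmodType R; prevd : {linear prevM -> Dm} }.

Definition zmod0 : lmodType R := 'rV[R]_0.
Lemma zmod0_eq (x : zmod0) : x = 0. Proof. exact: thinmx0. Qed.

Definition zeroStage n : Stage n := @mkStage n zmod0 lzero zmod0 lzero.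

Section Next.
Variables (n : int) (s : Stage n).
Definition NV : lmodType R := (Dm s * cobj C (n+1))%type.
Definition NW (v : NV) : Prop := exists c z, v = (ph s c + prevd s z, - cdif C n c).
Lemma NW0 : NW 0.
Proof. by exists 0, 0; rewrite !linear0 addr0 ?oppr0. Qed.
Lemma NWB x y : NW x -> NW y -> NW (x - y).
Proof.
move=> [c1 [z1 ->]] [c2 [z2 ->]]; exists (c1 - c2), (z1 - z2).
by rewrite !linearB /=; congr pair; rewrite /= opprD addrACA.
Qed.
Lemma NWZ r x : NW x -> NW (r *: x).
Proof.
move=> [c [z ->]]; exists (r *: c), (r *: z).
by rewrite !linearZ /=; congr pair; rewrite /= ?scalerDr ?scalerN.
Qed.
Definition NS : subm NV := Subm NW0 NWB NWZ.
Definition NP : lmodType R := Q NS.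
Definition nph (c : cobj C (n+1)) : env NP := envm NP (qpi NS (0, c)).
Definition nd (y : Dm s) : env NP := envm NP (qpi NS (y, 0)).
Lemma nph_lin : linear nph.
Proof. move=> r x y; rewrite /nph -!linearP; congr (envm NP (qpi NS _)).
by congr pair; rewrite /= ?scaler0 ?addr0. Qed.
Lemma nd_lin : linear nd.
Proof. move=> r x y; rewrite /nd -!linearP; congr (envm NP (qpi NS _)).
by congr pair; rewrite /= ?scaler0 ?addr0. Qed.
HB.instance Definition _ := GRing.isLinear.Build R _ _ _ nph nph_lin.
HB.instance Definition _ := GRing.isLinear.Build R _ _ _ nd nd_lin.
Definition next : Stage (n+1) := @mkStage (n+1) (env NP) nph (Dm s) nd.
End Next.


Lemma Xinj0 : Xinjective X zmod0.
Proof. move=> N _ Y i p _ _ _; exists lzero => e; exact/esym/zmod0_eq. Qed.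

Fixpoint shift (k : nat) : int := match k with 0%N => a - 1 | k'.+1 => shift k' + 1 end.
Fixpoint stageIter (k : nat) : Stage (shift k) :=
  match k as k0 return Stage (shift k0) with
  | 0%N => zeroStage (a - 1) | k'.+1 => next (stageIter k') end.

Lemma shiftE k : shift k = a - 1 + k%:Z.
Proof. elim: k => [|k IH] /=; first by rewrite addr0. rewrite IH; lia. Qed.

Definition kOf (n : int) : nat := absz (n - (a - 1))%R.
Lemma shift_kOf n : a - 1 <= n -> shift (kOf n) = n.
Proof. rewrite shiftE /kOf => h; lia. Qed.
Lemma kOf_succ n : a - 1 <= n -> kOf (n + 1) = (kOf n).+1.
Proof. rewrite /kOf => h; lia. Qed.
Lemma le_succ n : a - 1 <= n -> a - 1 <= n + 1.
Proof. lia. Qed.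

Definition decT n := ({a - 1 <= n} + {~~ (a - 1 <= n)})%type.
Definition dec n : decT n :=
  if (a - 1 <= n) as b return ({b} + {~~ b})%type then left isT else right isT.

Definition stageAt_aux n (b : decT n) : Stage n :=
  match b with
  | left h => eq_rect _ Stage (stageIter (kOf n)) n (shift_kOf h)
  | right _ => zeroStage n end.

Lemma iter_cast k k' n (e : shift k = n) (e' : shift k' = n + 1) : k' = k.+1 ->
  eq_rect _ Stage (stageIter k') _ e' = next (eq_rect _ Stage (stageIter k) _ e).
Proof. move=> ?; subst k' n. by rewrite (proof_irrelevance _ e' erefl). Qed.

Lemma Heq n (h : a - 1 <= n) (h' : a - 1 <= n + 1) :
  stageAt_aux (left h') = next (stageAt_aux (left h)).
Proof. exact: iter_cast (kOf_succ h). Qed.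

Definition trans n (s : Stage n) (t : Stage (n + 1)) (H : t = next s) : {linear Dm s -> Dm t} :=
  (@eq_rect_r _ (next s) (fun t => {linear Dm s -> Dm t}) (@nd _ s : {linear Dm s -> env (NP s)}) t H).

Definition cdif_aux n (b : decT n) (b' : decT (n + 1)) :
    {linear Dm (stageAt_aux b) -> Dm (stageAt_aux b')} :=
  match b as b0 return {linear Dm (stageAt_aux b0) -> Dm (stageAt_aux b')} with
  | left h =>
    match b' as b1 return {linear Dm (stageAt_aux (left h)) -> Dm (stageAt_aux b1)} with
    | left h' => trans (Heq h h')
    | right _ => lzero end
  | right _ => lzero end.

Lemma nd_nd n (s : Stage n) (t : Stage (n + 1)) (u : Stage (n + 1 + 1))
  (H1 : t = next s) (H2 : u = next t) x : trans H2 (trans H1 x) = 0.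
Proof.
subst u t; rewrite /trans /= /nd.
rewrite (pi0 (S := @NS _ (next s))) ?linear0 //.
by exists 0, x; rewrite linear0 add0r linear0 oppr0.
Qed.

Lemma cdd_D n (x : Dm (stageAt_aux (dec n))) :
  cdif_aux (dec (n + 1)) (dec (n + 1 + 1)) (cdif_aux (dec n) (dec (n + 1)) x) = 0.
Proof.
move: x; case: (dec n) => h; case: (dec (n + 1)) => h1; case: (dec (n + 1 + 1)) => h2 x /=.
- exact: nd_nd.
all: by rewrite /lzero ?linear0.
Qed.

Definition D : complex R := @Complex R (fun n => Dm (stageAt_aux (dec n)))
  (fun n => cdif_aux (dec n) (dec (n + 1))) cdd_D.


Definition phiD n : {linear cobj C n -> cobj D n} := ph (stageAt_aux (dec n)).

Lemma ph_trans n (s : Stage n) (t : Stage (n + 1)) (H : t = next s) x :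
  ph t (cdif C n x) = trans H (ph s x).
Proof.
subst t; rewrite /trans /= /nph /nd; apply: congr1; apply: pi_eq.
exists (- x), 0; rewrite !linearN linear0 addr0 opprK /=.
by congr pair; rewrite /= ?sub0r ?subr0 ?oppr0 ?addr0.
Qed.

Lemma Cbot' n : ~~ (a - 1 <= n) -> forall x : cobj C n, x = 0.
Proof. move=> h; apply: Cbot; lia. Qed.

Lemma phiD_chain : chain_map phiD.
Proof.
move=> n x; rewrite /phiD /=; case: (dec n) => h; case: (dec (n + 1)) => h1 /=.
- exact: ph_trans.
- by move: h1; rewrite le_succ.
- by rewrite (Cbot' h x) !linear0.
- by rewrite (Cbot' h x) !linear0.
Qed.

Lemma Xinj_iter k : Xinjective X (Dm (stageIter k)).
Proof. case: k => [|k] /=; [exact: Xinj0 | exact: (envP _).1]. Qed.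

Lemma Xinj_cast m n (e : m = n) (s : Stage m) :
  Xinjective X (Dm s) -> Xinjective X (Dm (eq_rect m Stage s n e)).
Proof. by case: n / e. Qed.

Lemma D_Xinj : C_Xinjective X D.
Proof.
move=> n /=; case: (dec n) => h /=; last exact: Xinj0.
apply: Xinj_cast; exact: Xinj_iter.
Qed.

Section Univ.
Variable E' : complex R.
Variable f : forall n : int, {linear cobj C n -> cobj E' n}.
Hypothesis fchain : chain_map f.
Hypothesis hE' : C_Xinjective X E'.

Definition Inv n (s : Stage n) (g : {linear Dm s -> cobj E' n}) : Prop :=
  (forall c, g (ph s c) = f n c) /\ (forall z, cdif E' n (g (prevd s z)) = 0).

Section GNext.
Variables (n : int) (s : Stage n) (g : {linear Dm s -> cobj E' n}) (Hg : Inv g).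
Definition hmap (v : NV s) : cobj E' (n + 1) := cdif E' n (g v.1) + f (n + 1) v.2.
Lemma hmap_lin : linear hmap.
Proof. by move=> r x y; rewrite /hmap /= !linearP scalerDr addrACA. Qed.
HB.instance Definition _ := GRing.isLinear.Build R _ _ _ hmap hmap_lin.
Lemma hmapW v : NW v -> hmap v = 0.
Proof.
case=> c [z ->]; rewrite /hmap /= !linearD linearN (proj2 Hg) (proj1 Hg) fchain.
by rewrite addr0 subrr.
Qed.
Definition hq : {linear NP s -> cobj E' (n + 1)} := qlift (S := NS s) hmapW.
Lemma hqE v : hq (qpi (NS s) v) = hmap v.
Proof. exact: qliftE. Qed.
Definition gnext_sig := constructive_indefinite_description _
  ((envP (NP s)).2 (cobj E' (n + 1)) hq (@hE' (n + 1))).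
Definition gnext : {linear Dm (next s) -> cobj E' (n + 1)} := proj1_sig gnext_sig.
Lemma gnextE p : gnext (envm (NP s) p) = hq p.
Proof. exact: (proj2_sig gnext_sig). Qed.
Lemma gnext_step y : gnext (@nd _ s y) = cdif E' n (g y).
Proof. by rewrite /nd gnextE hqE /hmap /= linear0 addr0. Qed.
Lemma gnext_Inv : Inv gnext.
Proof.
split => [c|z] /=.
- by rewrite /nph gnextE hqE /hmap /= !linear0 add0r.
- by rewrite gnext_step cdd.
Qed.
End GNext.

Lemma Inv0 : Inv (s := zeroStage (a - 1)) lzero.
Proof.
split => [c|z] /=; last by rewrite /lzero linear0.
by rewrite /lzero (@Cbot (a - 1) _ c) ?linear0 //; lia.
Qed.

Fixpoint gIter (k : nat) : {g : {linear Dm (stageIter k) -> cobj E' (shift k)} | Inv g} :=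
  match k as k0 return {g : {linear Dm (stageIter k0) -> cobj E' (shift k0)} | Inv g} with
  | 0%N => exist _ (lzero : {linear Dm (stageIter 0) -> cobj E' (shift 0)}) Inv0
  | k'.+1 => exist _ (gnext (proj2_sig (gIter k'))) (gnext_Inv (proj2_sig (gIter k')))
  end.

Definition castG m n (e : m = n) (s : Stage m) (g : {linear Dm s -> cobj E' m}) :
    {linear Dm (eq_rect m Stage s n e) -> cobj E' n} :=
  match e as e0 in _ = n0 return {linear Dm (eq_rect m Stage s n0 e0) -> cobj E' n0} with
  | erefl => g end.

Definition gAt_aux n (b : decT n) : {linear Dm (stageAt_aux b) -> cobj E' n} :=
  match b as b0 return {linear Dm (stageAt_aux b0) -> cobj E' n} with
  | left h => castG (shift_kOf h) (proj1_sig (gIter (kOf n)))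
  | right _ => lzero end.

Definition gD n : {linear cobj D n -> cobj E' n} := gAt_aux (dec n).

Lemma castG_ph m n (e : m = n) (s : Stage m) (g : {linear Dm s -> cobj E' m}) :
  (forall c, g (ph s c) = f m c) -> forall x, castG e g (ph (eq_rect m Stage s n e) x) = f n x.
Proof. by case: n / e. Qed.

Lemma gD_phi n x : gD n (phiD n x) = f n x.
Proof.
rewrite /gD /phiD /=; case: (dec n) => h /=.
- by apply: castG_ph; case: (proj2_sig (gIter (kOf n))).
- by rewrite (Cbot' h x) !linear0.
Qed.

Lemma G2gen k k' n (e : shift k = n) (e' : shift k' = n + 1) (Hk : k' = k.+1)
  (H : eq_rect _ Stage (stageIter k') _ e' = next (eq_rect _ Stage (stageIter k) _ e)) y :
  castG e' (proj1_sig (gIter k')) (trans H y) = cdif E' n (castG e (proj1_sig (gIter k)) y).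
Proof.
subst k' n; move: H y; rewrite (proof_irrelevance _ e' erefl) => H y /=.
rewrite (proof_irrelevance _ H erefl) /trans /=.
exact: gnext_step.
Qed.

Lemma gD_chain_aux n (b : decT n) (b' : decT (n + 1)) (y : Dm (stageAt_aux b)) :
  gAt_aux b' (cdif_aux b b' y) = cdif E' n (gAt_aux b y).
Proof.
move: y; case: b => h; case: b' => h1 y /=.
- exact: (@G2gen (kOf n) (kOf (n + 1)) n (shift_kOf h) (shift_kOf h1) (kOf_succ h) (Heq h h1) y).
- by move: h1; rewrite le_succ.
- by rewrite /lzero !linear0.
- by rewrite /lzero !linear0.
Qed.

Lemma gD_chain : chain_map gD.
Proof. move=> n y; exact: gD_chain_aux. Qed.

End Univ.

Lemma D_preenv : complex_preenvelope (C_Xinjective X) (E := D) phiD.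
Proof.
split; first exact: phiD_chain.
split; first exact: D_Xinj.
move=> E' f fc hE'; exists (gD fc hE'); split; first exact: gD_chain.
exact: gD_phi.
Qed.

End Main.

Theorem lemma2p24 (R : pzRingType) (X : lmodType R -> Prop) :
  (forall M : lmodType R,
     exists (E : lmodType R) (phi : {linear M -> E})
            (Q : lmodType R) (pi : {linear E -> Q}),
       mod_preenvelope (Xinjective X) phi /\ injective phi /\
       is_coker phi pi /\ X Q) ->
  forall C : complex R, bounded_complex C ->
    has_complex_preenvelope (C_Xinjective X) C.
Proof.
move=> H C [a [b hb]].
pose envE (M : lmodType R) := constructive_indefinite_description _ (H M).
pose envF (M : lmodType R) := constructive_indefinite_description _ (proj2_sig (envE M)).
have envP : forall M : lmodType R, mod_preenvelope (Xinjective X) (proj1_sig (envF M)).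
  move=> M; have [Q [pi [hp _]]] := proj2_sig (envF M); exact: hp.
have Cbot : forall n, n < a -> forall x : cobj C n, x = 0.
  by move=> n hn x; apply: hb; left.
by exists (D (fun M => proj1_sig (envF M)) C a), (phiD (fun M => proj1_sig (envF M)) C a); exact: (D_preenv envP Cbot).
Qed.
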